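(* Let $A=[a_{ij}]\in\mathfrak{B}_{n\times m}$ be a semi-canonical matrix. Then there exist integers $i,j$ with $0\le i\le n$ and $0\le j\le m$ such that $a_{11}=a_{12}=\cdots=a_{1j}=0$ and $a_{1,j+1}=a_{1,j+2}=\cdots=a_{1m}=1$, and $a_{11}=a_{21}=\cdots=a_{i1}=0$ and $a_{i+1,1}=a_{i+2,1}=\cdots=a_{n1}=1$.
   Context: $\mathfrak{B}_{n\times m}$ denotes the set of all $n\times m$ matrices with entries in $\{0,1\}$. For $A=[a_{ij}]\in\mathfrak{B}_{n\times m}$, $r(A)=\langle x_1,\dots,x_n\rangle$ with $x_i=\sum_{j=1}^m a_{ij}2^{m-j}$ and $c(A)=\langle y_1,\dots,y_m\rangle$ with $y_j=\sum_{i=1}^n a_{ij}2^{n-i}$. $A$ is semi-canonical if $x_1\le x_2\le\cdots\le x_n$ and $y_1\le y_2\le\cdots\le y_m$. *)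

(* Defs.v *)
From mathcomp Require Import all_boot all_algebra.
Set Implicit Arguments. Unset Strict Implicit. Unset Printing Implicit Defensive.

(* A binary n x m matrix: entries in {0,1} represented as bool (true = 1).
   Indices are 0-based: row i : 'I_n is row i+1 of the paper. *)

(* x_i = sum_j a_ij 2^(m-j)  (paper, 1-based)  = sum_{j<m} a_ij 2^(m-1-j) (0-based) *)
Definition rowval n m (A : 'M[bool]_(n, m)) (i : 'I_n) : nat :=
  \sum_(j < m) (A i j : nat) * 2 ^ (m - 1 - j).

(* y_j = sum_i a_ij 2^(n-i) (1-based) *)
Definition colval n m (A : 'M[bool]_(n, m)) (j : 'I_m) : nat :=
  \sum_(i < n) (A i j : nat) * 2 ^ (n - 1 - i).

Definition semi_canonical n m (A : 'M[bool]_(n, m)) : Prop :=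
  (forall i1 i2 : 'I_n, i1 <= i2 -> rowval A i1 <= rowval A i2) /\
  (forall j1 j2 : 'I_m, j1 <= j2 -> colval A j1 <= colval A j2).

(* Main.v *)
Require Import Defs.
From mathcomp Require Import all_boot all_algebra.
From mathcomp Require Import zify.

Lemma sum_pow2_lt k : \sum_(i < k) 2 ^ (k - 1 - i) < 2 ^ k.
Proof.
elim: k => [|k IH]; first by rewrite big_ord0.
rewrite big_ord_recl /= subn0 subSS subn0.
have -> : \sum_(i < k) 2 ^ (k - (bump 0 i)) = \sum_(i < k) 2 ^ (k - 1 - i).
  by apply: eq_bigr => i _; congr (2 ^ _); rewrite /bump /=; lia.
rewrite expnS mul2n -addnn ltn_add2l //.
Qed.

Lemma topbit n m (A : 'M[bool]_(n, m)) i (c : 'I_m) : val c = 0 ->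
  (A i c -> 2 ^ (m - 1) <= rowval A i) /\ (~~ A i c -> rowval A i < 2 ^ (m - 1)).
Proof.
case: m A c => [|m] A c hc; first by case: c hc.
have e : c = ord0 by apply: val_inj.
subst c.
rewrite /rowval big_ord_recl /= subn0 subSS subn0.
have Hr : \sum_(k < m) (A i (lift ord0 k) : nat) * 2 ^ (m - bump 0 k) < 2 ^ m.
  apply: leq_ltn_trans (sum_pow2_lt m).
  apply: leq_sum => k _.
  have -> : m - bump 0 k = m - 1 - k by rewrite /bump /=; lia.
  by case: (A i _); rewrite ?mul1n ?mul0n.
by split; case: (A i ord0) => //= _; rewrite ?mul1n ?mul0n ?add0n ?leq_addr.
Qed.

Lemma mono_nat (f : nat -> bool) m :
  (forall k1 k2, k1 <= k2 -> k2 < m -> f k1 -> f k2) ->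
  exists j, j <= m /\ forall k, k < m -> f k = (j <= k).
Proof.
elim: m => [|m IH] H; first by exists 0.
have [|j [hj Hj]] := IH.
  by move=> k1 k2 h1 h2; apply: H => //; apply: ltnW.
case hf: (f m).
- exists j; split; first by apply: leq_trans hj _.
  move=> k; rewrite ltnS leq_eqVlt => /orP [/eqP ->|hk].
    by rewrite hf hj.
  exact: Hj.
- exists m.+1; split => // k; rewrite ltnS leq_eqVlt => /orP [/eqP ->|hk].
    by rewrite hf ltnn.
  have -> : (m.+1 <= k) = false by apply/negbTE; rewrite -ltnNge; apply: ltnW.
  apply/negbTE/negP => fk; move: (H k m (ltnW hk) (ltnSn m) fk); by rewrite hf.
Qed.

Lemma mono_ord m (g : 'I_m -> bool) :
  (forall k1 k2 : 'I_m, k1 <= k2 -> g k1 -> g k2) ->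
  exists j, j <= m /\ forall k : 'I_m, g k = (j <= k).
Proof.
move=> H.
pose f k := odflt false (omap g (insub k)).
have fE (k : 'I_m) : f k = g k by rewrite /f valK.
have [|j [hj Hj]] := @mono_nat f m.
  move=> k1 k2 h12 h2.
  have h1 : k1 < m by apply: leq_ltn_trans h2.
  have -> : k1 = val (Ordinal h1) by [].
  have -> : k2 = val (Ordinal h2) by [].
  rewrite !fE; exact: H.
by exists j; split => // k; rewrite -fE Hj.
Qed.

Lemma colvalE n m (A : 'M[bool]_(n, m)) j : colval A j = rowval A^T j.
Proof. by rewrite /colval /rowval; apply: eq_bigr => i _; rewrite mxE. Qed.

Theorem proposition3 (n m : nat) (A : 'M[bool]_(n, m)) :
  semi_canonical A ->
  exists i j : nat,
    i <= n /\ j <= m /\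
    (* first row: a_{1,k+1} = 0 for k < j and = 1 for k >= j (0-based k) *)
    (forall (r : 'I_n) (k : 'I_m), val r = 0 -> A r k = (j <= k)) /\
    (* first column: a_{k+1,1} = 0 for k < i and = 1 for k >= i *)
    (forall (k : 'I_n) (c : 'I_m), val c = 0 -> A k c = (i <= k)).
Proof.
move=> [Hrow Hcol].
have [j [hj Hj]] : exists j, j <= m /\
    (forall (r : 'I_n) (k : 'I_m), val r = 0 -> A r k = (j <= k)).
  case: n A Hrow Hcol => [|n] A Hrow Hcol; first by exists 0; split => // [[]].
  have [|j [hj Hj]] := @mono_ord m (fun k => A ord0 k).
    move=> k1 k2 h12 a1; apply/negP => /negP a2.
    have [t1 _] := @topbit _ _ A^T k1 ord0 erefl.
    have [_ t2] := @topbit _ _ A^T k2 ord0 erefl.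
    rewrite !mxE in t1 t2.
    have h : rowval A^T k1 <= rowval A^T k2 by rewrite -!colvalE; apply: Hcol.
    by have := leq_ltn_trans (leq_trans (t1 a1) h) (t2 a2); rewrite ltnn.
  exists j; split => // r k hr.
  by rewrite (_ : r = ord0); last by apply: val_inj.
have [i [hi Hi]] : exists i, i <= n /\
    (forall (k : 'I_n) (c : 'I_m), val c = 0 -> A k c = (i <= k)).
  case: m A Hrow Hcol {Hj hj} => [|m] A Hrow Hcol; first by exists 0; split => // ? [].
  have [|i [hi Hi]] := @mono_ord n (fun k => A k ord0).
    move=> k1 k2 h12 a1; apply/negP => /negP a2.
    have [t1 _] := @topbit _ _ A k1 ord0 erefl.
    have [_ t2] := @topbit _ _ A k2 ord0 erefl.
    have h : rowval A k1 <= rowval A k2 by apply: Hrow.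
    by have := leq_ltn_trans (leq_trans (t1 a1) h) (t2 a2); rewrite ltnn.
  exists i; split => // k c hc.
  by rewrite (_ : c = ord0); last by apply: val_inj.
by exists i, j.
Qed.
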